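(* Let $D\in\mathcal{R}$. Then $\widetilde L^-(D)=\widetilde N^-(D)$.
   Context: Let $n\ge 1$ and $\Phi^+=\{(i,j)\in\mathbb{Z}^2:1\le j<i\le n\}$, with rows $\mathcal{R}_k=\{(k,s)\in\Phi^+\}$ and columns $\mathcal{C}_k=\{(r,k)\in\Phi^+\}$. A rook placement is a subset $D\subseteq\Phi^+$ with $|D\cap\mathcal{R}_k|\le1$ and $|D\cap\mathcal{C}_k|\le1$ for all $k$; $\mathcal{R}$ is the set of rook placements. For $D\in\mathcal{R}$, $R_D$ is the $n\times n$ integer matrix with $(R_D)_{i,j}=\#\{(a,b)\in D:a\ge i,\ b\le j\}$ for $i>j$ and $0$ otherwise; $D\le D'$ means $R_D\le R_{D'}$ entrywise. Order on $\Phi^+$: $(a,b)\le(c,d)$ iff $a\le c$ and $b\ge d$; $\widetilde M(D)$ is the set of minimal elements of $D$ for this order. Define $\widetilde N^-(D)=\{D\setminus\{(i,j)\}:(i,j)\in\widetilde M(D)\}$ and $\widetilde L^-(D)=\{T\in\mathcal{R}: T<D,\ |T|<|D|$, and every $S\in\mathcal{R}$ with $T\le S<D$ and $|S|<|D|$ equals $T\}$. *)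

(* Defs.v *)
(* Positions (i,j) of Phi^+ are encoded 0-based as elements
   of 'I_n * 'I_n: the paper's (i,j), 1 <= j < i <= n, is (i-1, j-1). *)
From mathcomp Require Import all_boot.
Set Implicit Arguments. Unset Strict Implicit. Unset Printing Implicit Defensive.

Definition pos n := ('I_n * 'I_n)%type.

Definition phiplus n : {set pos n} := [set p : pos n | p.2 < p.1].

Definition row_k n (k : 'I_n) : {set pos n} := [set p in phiplus n | p.1 == k].
Definition col_k n (k : 'I_n) : {set pos n} := [set p in phiplus n | p.2 == k].

Definition rook n (D : {set pos n}) : bool :=
  [&& D \subset phiplus n,
      [forall k : 'I_n, #|D :&: row_k k| <= 1] &
      [forall k : 'I_n, #|D :&: col_k k| <= 1]].

Definition rankmx n (D : {set pos n}) (i j : 'I_n) : nat :=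
  if j < i then #|[set p in D | (i <= p.1) && (p.2 <= j)]| else 0.

Definition rle n (D D' : {set pos n}) : bool :=
  [forall i : 'I_n, forall j : 'I_n, rankmx D i j <= rankmx D' i j].
Definition rlt n (D D' : {set pos n}) : bool := rle D D' && (D != D').

Definition pos_le n (p q : pos n) : bool := (p.1 <= q.1) && (q.2 <= p.2).

Definition Mtilde n (D : {set pos n}) : {set pos n} :=
  [set p in D | [forall q in D, pos_le q p ==> (q == p)]].

Definition Ntilde_minus n (D : {set pos n}) : {set {set pos n}} :=
  [set D :\ p | p in Mtilde D].

Definition Ltilde_minus n (D : {set pos n}) : {set {set pos n}} :=
  [set T : {set pos n} | [&& rook T, rlt T D, #|T| < #|D| &
     [forall S : {set pos n},
        [&& rook S, rle T S, rlt S D & #|S| < #|D|] ==> (S == T)]]].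

(* Main.v *)
Require Import Defs.
From mathcomp Require Import all_boot zify.
Set Implicit Arguments. Unset Strict Implicit. Unset Printing Implicit Defensive.

Definition Qs n (i j : nat) : {set pos n} := [set p : pos n | (i <= p.1) && (p.2 < j)].

Lemma rankmxE n (X : {set pos n}) (i j : 'I_n) : j < i -> rankmx X i j = #|X :&: Qs n i j.+1|.
Proof. move=> h; rewrite /rankmx h; apply: eq_card => p; by rewrite !inE ltnS. Qed.

Lemma Qs_empty n (X : {set pos n}) i j : (j = 0 \/ n <= i) -> #|X :&: Qs n i j| = 0.
Proof.
move=> h; apply: eq_card0 => p; rewrite !inE.
apply/negbTE/negP => /and3P[_ h1 h2]; have := ltn_ord p.1; case: h => h; [move: h2; rewrite h ltn0 // | by have := leq_ltn_trans (leq_trans h h1) (ltn_ord p.1); rewrite ltnn].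
Qed.

Lemma rleP n (X Y : {set pos n}) :
  rle X Y <-> (forall i j, j <= i -> #|X :&: Qs n i j| <= #|Y :&: Qs n i j|).
Proof.
split.
- move=> /forallP H i j hji.
  case: (ltnP i n) => hi; last by rewrite Qs_empty //; right.
  case: j hji => [|j] hji; first by rewrite Qs_empty //; left.
  have hj : j < n by apply: ltn_trans hi.
  have := forallP (H (Ordinal hi)) (Ordinal hj).
  by rewrite !rankmxE.
- move=> H; apply/forallP => i; apply/forallP => j.
  case: (ltnP j i) => h; first by rewrite !rankmxE //; apply: H.
  by rewrite /rankmx ltnNge h.
Qed.

Lemma decomp n (X Q : {set pos n}) p : #|X :&: Q| = (p \in X :&: Q) + #|(X :\ p) :&: Q|.
Proof.
rewrite (cardsD1 p (X :&: Q)); congr (_ + _); apply: eq_card => x; rewrite !inE.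
by case: (x == p); case: (x \in X); case: (x \in Q).
Qed.

Lemma rook_sub n (D S : {set pos n}) : rook D -> S \subset D -> rook S.
Proof.
case/and3P => h1 /forallP h2 /forallP h3 hS; apply/and3P; split.
- exact: subset_trans hS h1.
- apply/forallP => k; apply: leq_trans (h2 k); apply: subset_leq_card; exact: setSI.
- apply/forallP => k; apply: leq_trans (h3 k); apply: subset_leq_card; exact: setSI.
Qed.

Lemma cardIE n (X A : {set pos n}) : #|X :&: A| = \sum_(p in X) (p \in A).
Proof.
rewrite -sum1_card (eq_bigl (fun p => (p \in X) && (p \in A))); last by move=> p; rewrite inE.
rewrite big_mkcondr; apply: eq_bigr => p _; by case: (p \in A).
Qed.

Lemma corner n (X : {set pos n}) (q : pos n) :
  #|X :&: Qs n q.1 q.2.+1| + #|X :&: Qs n q.1.+1 q.2| =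
  #|X :&: [set q]| + #|X :&: Qs n q.1.+1 q.2.+1| + #|X :&: Qs n q.1 q.2|.
Proof.
rewrite !cardIE -!big_split /=; apply: eq_bigr => p _.
rewrite !inE; case: p q => [a b] [x y] /=; rewrite xpair_eqE -!val_eqE /=.
move: (nat_of_ord a) (nat_of_ord b) (nat_of_ord x) (nat_of_ord y) => a' b' x' y'.
case: (ltngtP x' a') => h1; case: (ltngtP b' y') => h2 //=; rewrite ?h1 ?h2 ?eqxx /=; lia.
Qed.

Lemma inter_region n (E : {set pos n}) (e : pos n) :
  (forall x, x \in E -> x.1 <= e.1) -> e.2 <= e.1 ->
  exists i j, j <= i /\ Qs n e.1 e.2 :&: \bigcup_(x in E) Qs n x.1 x.2 = Qs n i j.
Proof.
move=> Hmax He.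
case: (set_0Vmem E) => [->|[e0 he0]].
  exists 0, 0; split => //; apply/setP => p; rewrite big_set0 setI0 !inE.
  by [].
have [e2 he2 e2max] := @arg_maxnP _ e0 (mem E) (fun x => nat_of_ord x.2) he0.
exists e.1, (minn e.2 e2.2); split; first by rewrite geq_min He.
apply/setP => p; rewrite !inE leq_min.
apply/idP/idP.
- case/andP => /andP[h1 h2] /bigcupP [x hx]; rewrite inE => /andP[h3 h4].
  by rewrite h1 h2 /= (leq_ltn_trans _ (leq_trans h4 (e2max x hx))) //= leq_min.
- case/andP => h1 /andP[h2 h3]; rewrite h1 h2 /=; apply/bigcupP; exists e2 => //.
  by rewrite inE h3 (leq_trans (Hmax _ he2) h1).
Qed.

Lemma stair n (X Y : {set pos n}) :
 (forall i j, j <= i -> #|X :&: Qs n i j| <= #|Y :&: Qs n i j|) ->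
 forall E : {set pos n},
 (forall e, e \in E -> e.2 <= e.1 /\ #|X :&: Qs n e.1 e.2| = #|Y :&: Qs n e.1 e.2|) ->
 #|Y :&: \bigcup_(e in E) Qs n e.1 e.2| <= #|X :&: \bigcup_(e in E) Qs n e.1 e.2|.
Proof.
move=> H E; have [k] := ubnP #|E|; elim: k E => [|k IH] E hk hE //.
case: (set_0Vmem E) => [->|[e0 he0]]; first by rewrite big_set0 !setI0.
have [e he emax] := @arg_maxnP _ e0 (mem E) (fun x => nat_of_ord x.1) he0.
rewrite (big_setD1 e he) /= !setIUr !cardsU -!setIIr.
have [hee1 hee2] := hE e he.
have hE' : forall x, x \in E :\ e -> x.2 <= x.1 /\ #|X :&: Qs n x.1 x.2| = #|Y :&: Qs n x.1 x.2|.
  by move=> x; rewrite inE => /andP[_ /hE].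
have heE : e \in E := he.
have hk' : #|E :\ e| < k by move: hk; rewrite (cardsD1 e E) heE.
have := IH _ hk' hE'.
have hmx : forall x, x \in E :\ e -> x.1 <= e.1 by move=> x; rewrite inE => /andP[_ /emax].
set W' := \bigcup_(x in E :\ e) Qs n x.1 x.2.
have cY : #|Y :&: (Qs n e.1 e.2 :&: W')| <= #|Y :&: W'|.
  by apply: subset_leq_card; apply: setIS; apply: subsetIr.
have cX : #|X :&: (Qs n e.1 e.2 :&: W')| <= #|X :&: W'|.
  by apply: subset_leq_card; apply: setIS; apply: subsetIr.
have [i [j [hji hQ]]] := inter_region hmx hee1.
rewrite -/W' hQ in cY cX *.
have := H _ _ hji; rewrite hee2; move: cY cX; move: (#|Y :&: Qs n i j|) (#|X :&: Qs n i j|) (#|Y :&: W'|) (#|X :&: W'|) (#|Y :&: Qs n e.1 e.2|) => *; lia.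
Qed.

Lemma rle_sub n (S D : {set pos n}) : S \subset D -> rle S D.
Proof.
move=> hS; apply/rleP => i j _; apply: subset_leq_card; exact: setSI.
Qed.

Lemma D1_props n (D : {set pos n}) p : rook D -> p \in D ->
  [/\ rook (D :\ p), rlt (D :\ p) D & #|D :\ p| < #|D| ].
Proof.
move=> rD pD; split.
- by apply: rook_sub rD _; apply: subsetDl.
- rewrite /rlt rle_sub ?subsetDl //=; apply/negP => /eqP h.
  by move: pD; rewrite -h !inE eqxx.
- by rewrite (cardsD1 p D) pD.
Qed.

Lemma lemma3p8 (n : nat) (hn : 1 <= n) (D : {set pos n}) :
  rook D -> Ltilde_minus D = Ntilde_minus D.
Proof.
move=> rD; apply/setP => T; apply/idP/idP.
- rewrite inE => /and4P [rT /andP[leTD neTD] ltTD /forallP maxT].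
  have HTD := (proj1 (rleP T D)) leTD.
  set E := [set e : pos n | (e.2 <= e.1) && (#|T :&: Qs n e.1 e.2| == #|D :&: Qs n e.1 e.2|)].
  set W := \bigcup_(e in E) Qs n e.1 e.2.
  have hst := @stair n T D HTD E.
  have hst' : #|D :&: W| <= #|T :&: W|.
    apply: hst => e; rewrite inE => /andP[h1 /eqP h2]; by split.
  have nsub : ~~ (D \subset W).
    apply/negP => /setIidPl hDW; rewrite hDW in hst'.
    have := subset_leq_card (subsetIl T W); lia.
  case/subsetPn: nsub => p0 p0D p0W.
  pose key (q : pos n) := (nat_of_ord q.1) + (n - q.2).
  have hp0 : p0 \in [set q in D | pos_le q p0] by rewrite inE p0D /pos_le !leqnn.
  have [p hp pmin] := @arg_minnP _ p0 (mem [set q in D | pos_le q p0]) key hp0.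
  have hp2 : p \in [set q in D | pos_le q p0] := hp.
  move: hp2; rewrite inE => /andP[pD pp0].
  have pM : p \in Mtilde D.
    rewrite inE pD /=; apply/forallP => q; apply/implyP => qD; apply/implyP => qp.
    have hq : q \in [set q in D | pos_le q p0].
      rewrite inE qD /=; move: qp pp0; rewrite /pos_le => /andP[a1 a2] /andP[b1 b2].
      by rewrite (leq_trans a1 b1) (leq_trans b2 a2).
    have := pmin q hq; move: qp; rewrite /pos_le /key.
    case: q p {pmin hq qD pD pp0 hp} => [q1 q2] [p1 p2] /=.
    have := ltn_ord q2; have := ltn_ord p2.
    rewrite xpair_eqE => h1 h2 h3 h5; apply/andP; split; apply/eqP; apply: ord_inj; move: h1 h2 h3 h5;
      move: (nat_of_ord q1) (nat_of_ord q2) (nat_of_ord p1) (nat_of_ord p2) => a b c d;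
      move=> h1 h2 /andP[h3 h4] h5; lia.
  have pW : p \notin W.
    apply/negP => /bigcupP [e he]; rewrite inE => /andP[h1 h2].
    move/negP: p0W; apply; apply/bigcupP; exists e => //; rewrite inE.
    move: pp0; rewrite /pos_le => /andP[h3 h4].
    by rewrite (leq_trans h1 h3) (leq_ltn_trans h4 h2).
  have leTS : rle T (D :\ p).
    apply/rleP => i j hji.
    have := decomp D (Qs n i j) p; have := HTD _ _ hji.
    case hpQ: (p \in Qs n i j); last by rewrite inE hpQ andbF /= => h; rewrite ?add0n => <-.
    rewrite inE hpQ pD /=.
    have hi : i < n.
      move: hpQ; rewrite inE => /andP[h _]; exact: leq_ltn_trans h (ltn_ord p.1).
    have hj : j < n by apply: leq_ltn_trans hji hi.
    have hne : #|T :&: Qs n i j| != #|D :&: Qs n i j|.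
      have hQe : Qs n (Ordinal hi, Ordinal hj).1 (Ordinal hi, Ordinal hj).2 = Qs n i j by [].
      apply/negP => /eqP heq; move/negP: pW; apply; apply/bigcupP; exists (Ordinal hi, Ordinal hj); last by rewrite hQe.
      rewrite /E in_set; apply/andP; split; [exact: hji | ].
      by rewrite hQe heq.
    move=> h1 h2; have : #|T :&: Qs n i j| < #|D :&: Qs n i j| by rewrite ltn_neqAle hne h1.
    by rewrite h2 add1n ltnS.
  have [rS ltSD cSD] := D1_props rD pD.
  have := maxT (D :\ p); rewrite rS leTS ltSD cSD /= => /eqP hT.
  by apply/imsetP; exists p.
- case/imsetP => p pM ->.
  move: (pM); rewrite inE => /andP[pD /forallP pmin].
  have [rS ltSD cSD] := D1_props rD pD.
  rewrite inE rS ltSD cSD /=; apply/forallP => S; apply/implyP.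
  case/and4P => rS' leTS /andP[leSD _] cS.
  have HTS := (proj1 (rleP _ _)) leTS; have HSD := (proj1 (rleP _ _)) leSD.
  have eqQ : forall i j, j <= i -> p \notin Qs n i j -> #|S :&: Qs n i j| = #|D :&: Qs n i j|.
    move=> i j hji hp; have := decomp D (Qs n i j) p; rewrite inE (negbTE hp) andbF /= => hd.
    have := HTS _ _ hji; have := HSD _ _ hji; rewrite hd ?add0n.
    by move=> h1 h2; apply/eqP; rewrite eqn_leq h1 h2.
  rewrite eq_sym eqEcard; apply/andP; split; last first.
    by move: cS; rewrite (cardsD1 p D) pD /= add1n ltnS.
  apply/subsetP => q; rewrite !inE => /andP[qp qD].
  have qpp : q.2 < q.1.
    by case/and3P: rD => /subsetP /(_ q qD); rewrite inE.
  have nqp : ~~ pos_le q p by apply/negP => h; move: (pmin q); rewrite qD h /= (negbTE qp).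
  have hc1 := corner S q; have hc2 := corner D q.
  have e1 : #|S :&: Qs n q.1 q.2.+1| = #|D :&: Qs n q.1 q.2.+1|.
    apply: eqQ => //; rewrite inE; move: nqp; rewrite /pos_le; apply: contra => /andP[h1 h2].
    by rewrite h1 -ltnS.
  have e2 : #|S :&: Qs n q.1.+1 q.2.+1| = #|D :&: Qs n q.1.+1 q.2.+1|.
    apply: eqQ; first by rewrite ltnS ltnW. rewrite inE; move: nqp; rewrite /pos_le; apply: contra => /andP[h1 h2].
    by rewrite (ltnW h1) -ltnS.
  have e3 : #|S :&: Qs n q.1 q.2| = #|D :&: Qs n q.1 q.2|.
    apply: eqQ; first exact: ltnW; rewrite inE; move: nqp; rewrite /pos_le; apply: contra => /andP[h1 h2].
    by rewrite h1 ltnW.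
  have e4 : #|S :&: Qs n q.1.+1 q.2| = #|D :&: Qs n q.1.+1 q.2|.
    apply: eqQ; first exact: leqW (ltnW qpp); rewrite inE; move: nqp; rewrite /pos_le; apply: contra => /andP[h1 h2].
    by rewrite (ltnW h1) ltnW.
  have hD1 : #|D :&: [set q]| = 1.
    by rewrite (setIidPr _) ?cards1 // sub1set.
  rewrite e1 e2 e3 e4 hD1 in hc1 hc2.
  have : #|S :&: [set q]| = 1.
    by rewrite hc1 in hc2; move/eqP: hc2; rewrite !eqn_add2r => /eqP.
  move=> h1; have : 0 < #|S :&: [set q]| by rewrite h1.
  rewrite card_gt0 => /set0Pn [x]; rewrite !inE => /andP[xS /eqP hx]; by rewrite -hx.
Qed.
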